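(* Let $a\in\mathbb{R}$, $\beta,\eta,\nu>0$ with $\eta^2<2\beta\nu$, $\mu=\eta/\nu$, $\sigma=2\beta/\nu$, and $p\in[1-\beta,1]$. Consider the quantile problem $$\sup_{q\ge a,\,f}\ q\quad\text{s.t.}\quad (1-\beta)+\int_a^q f(x)dx=p,\ \int_a^\infty f(x)dx=\beta,\ f(a)=f(a+)=\eta,\ f'_+(a)\ge-\nu,\ f\text{ convex on }[a,\infty),\ f\ge0\text{ on }[a,\infty).$$ Let $z^*(a,b)$ be the optimal value of the problem $\sup_f\int_b^\infty f(x)dx$ subject to the last five constraints above, and define $q^*=\inf\{b\ge a: z^*(a,b)=1-p\}$ (with $\inf\emptyset=\infty$). Then $q^*$ equals the optimal value of the quantile problem, and $$q^*=\begin{cases}a+\mu-\sqrt{\mu^2-\sigma+\frac{2(1-p)}{\nu}}&\text{if }1-\beta\le p\le1-\beta+\frac{\eta^2}{2\nu},\\ \infty&\text{if }p>1-\beta+\frac{\eta^2}{2\nu}.\end{cases}$$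
   Context: $f(a+)$ denotes the right limit of $f$ at $a$ and $f'_+$ the right derivative. The first constraint encodes that the distribution function equals $1-\beta$ at $a$ and equals $p$ at $q$, i.e. $q$ is the $p$-quantile. *)

(* Defs.v *)
From Stdlib Require Import Reals.
From Coquelicot Require Import Coquelicot.
Open Scope R_scope.

Definition convex_on_from (f : R -> R) (a : R) : Prop :=
  forall x y t, a <= x -> a <= y -> 0 <= t <= 1 ->
    f (t * x + (1 - t) * y) <= t * f x + (1 - t) * f y.

Definition feasible (a beta eta nu : R) (f : R -> R) : Prop :=
  is_RInt_gen f (at_point a) (Rbar_locally p_infty) beta /\
  f a = eta /\
  filterlim f (at_right a) (locally eta) /\
  (exists d, filterlim (fun x => (f x - f a) / (x - a)) (at_right a) (locally d)
             /\ - nu <= d) /\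
  convex_on_from f a /\
  (forall x, a <= x -> 0 <= f x).

Definition quantile_value (a beta eta nu p : R) : Rbar :=
  Lub_Rbar (fun q => a <= q /\ exists f, feasible a beta eta nu f /\
                       is_RInt f a q (p - (1 - beta))).

Definition zstar (a beta eta nu b : R) : Rbar :=
  Lub_Rbar (fun v => exists f, feasible a beta eta nu f /\
                       is_RInt_gen f (at_point b) (Rbar_locally p_infty) v).

Definition qstar (a beta eta nu p : R) : Rbar :=
  Glb_Rbar (fun b => a <= b /\ zstar a beta eta nu b = Finite (1 - p)).

(* Main.v *)
Require Import Defs.
From Stdlib Require Import Reals.
From Coquelicot Require Import Coquelicot.
From Stdlib Require Import Lra Psatz.
Open Scope R_scope.

Lemma gen_extract (f : R -> R) (u l : R) : is_RInt_gen f (at_point u) (Rbar_locally p_infty) l ->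
  forall eps : posreal, exists M0, forall B, M0 < B ->
   exists I, is_RInt f u B I /\ Rabs (I - l) < eps.
Proof.
intros H eps. specialize (H (ball l eps) (locally_ball l eps)).
destruct H as [Q R0 HQ HR HP]. destruct HR as [M HM].
exists M. intros B HB. destruct (HP u B HQ (HM B HB)) as [y [Hy Hb]].
exists y. split. exact Hy. exact Hb.
Qed.

Lemma zext (f : R -> R) (L : R) : (forall x, L <= x -> f x = 0) ->
  is_RInt_gen f (at_point L) (Rbar_locally p_infty) 0.
Proof.
intros H P HP. unfold filtermapi.
apply Filter_prod with (fun x => x = L) (fun x => L < x).
reflexivity. exists L; auto.
intros x y -> Hy. simpl in *. exists 0. split.
- apply is_RInt_ext with (fun _ => 0).
  intros z Hz. rewrite Rmin_left in Hz by lra. symmetry; apply H; lra.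
  pose proof (is_RInt_const L y 0) as K. unfold scal in K; simpl in K; unfold mult in K; simpl in K.
  rewrite Rmult_0_r in K. exact K.
- apply locally_singleton. exact HP.
Qed.

Lemma tail (f : R -> R) (a b l I : R) : is_RInt_gen f (at_point a) (Rbar_locally p_infty) l ->
  is_RInt f a b I -> is_RInt_gen f (at_point b) (Rbar_locally p_infty) (l - I).
Proof.
intros H HI.
assert (H1 : is_RInt_gen f (at_point b) (at_point a) (opp I)).
{ apply (is_RInt_gen_at_point (V:=R_NormedModule)). apply (is_RInt_swap (V:=R_NormedModule)). exact HI. }
pose proof (is_RInt_gen_Chasles f a _ _ H1 H) as K.
unfold plus, opp in K; simpl in K. replace (l - I) with (Rplus (Ropp I) l) by ring. exact K.
Qed.

Lemma gen_unique (f : R -> R) (u l l' : R) : is_RInt_gen f (at_point u) (Rbar_locally p_infty) l ->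
  is_RInt_gen f (at_point u) (Rbar_locally p_infty) l' -> l = l'.
Proof.
intros H H'.
apply Rminus_diag_uniq_sym.
destruct (Req_dec (l' - l) 0) as [E|E]; auto. exfalso.
assert (Hp : 0 < Rabs (l' - l) / 2) by (apply Rabs_pos_lt in E; lra).
destruct (gen_extract _ _ _ H (mkposreal _ Hp)) as [M1 H1].
destruct (gen_extract _ _ _ H' (mkposreal _ Hp)) as [M2 H2].
destruct (H1 (Rmax M1 M2 + 1)) as [I1 [HI1 B1]]. generalize (Rmax_l M1 M2); lra.
destruct (H2 (Rmax M1 M2 + 1)) as [I2 [HI2 B2]]. generalize (Rmax_r M1 M2); lra.
simpl in B1, B2.
assert (I2 = I1). { rewrite <- (is_RInt_unique _ _ _ _ HI1). rewrite <- (is_RInt_unique _ _ _ _ HI2). reflexivity. }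
subst. 
assert (Rabs (l' - l) <= Rabs (I1 - l) + Rabs (I1 - l')).
{ replace (l' - l) with ((I1 - l) - (I1 - l')) by ring. 
  eapply Rle_trans. apply Rabs_triang. rewrite Rabs_Ropp. lra. }
lra.
Qed.
Lemma ball_R (x e y : R) : ball x e y <-> Rabs (y - x) < e.
Proof. reflexivity. Qed.

Lemma rint_le (f g : R -> R) (u B I J : R) : u <= B -> is_RInt f u B I -> is_RInt g u B J ->
  (forall x, u <= x <= B -> g x <= f x) -> J <= I.
Proof.
intros HB HI HJ H. rewrite <- (is_RInt_unique _ _ _ _ HI), <- (is_RInt_unique _ _ _ _ HJ).
apply RInt_le; auto. eexists; eauto. eexists; eauto. intros; apply H; lra.
Qed.

Lemma rint_const (c u B : R) : is_RInt (fun _ => c) u B (c * (B - u)).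
Proof.
pose proof (is_RInt_const u B c) as K. unfold scal in K; simpl in K; unfold mult in K; simpl in K.
rewrite Rmult_comm. exact K.
Qed.

Lemma rint_aff (y0 k x0 x1 : R) :
  is_RInt (fun x => y0 - k * (x - x0)) x0 x1 ((2 * y0 - k * (x1 - x0)) * (x1 - x0) / 2).
Proof.
pose (F := fun x => y0 * (x - x0) - k * (x - x0) ^ 2 / 2).
assert (H : is_RInt (fun x => y0 - k * (x - x0)) x0 x1 (minus (F x1) (F x0))).
{ apply (is_RInt_derive (V := R_CompleteNormedModule) F).
  - intros x _. unfold F. auto_derive. auto. field.
  - intros x _. apply (ex_derive_continuous (K:=R_AbsRing) (V:=R_NormedModule)). auto_derive. auto. }
unfold minus, plus, opp in H; simpl in H. unfold F in H.
replace ((2 * y0 - k * (x1 - x0)) * (x1 - x0) / 2) with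
  (Rplus (y0 * (x1 - x0) - k * (x1 - x0) ^ 2 / 2) (Ropp (y0 * (x0 - x0) - k * (x0 - x0) ^ 2 / 2))) by (simpl; field).
exact H.
Qed.

Lemma split_rint (f : R -> R) (u y B I : R) : u <= y <= B -> is_RInt f u B I ->
  exists I1, is_RInt f u y I1 /\ is_RInt f y B (I - I1).
Proof.
intros Hy HI.
assert (E : ex_RInt f u y) by (apply (ex_RInt_Chasles_1 (V:=R_CompleteNormedModule)) with B; [lra| eexists; eauto]).
destruct E as [I1 HI1]. exists I1. split; auto.
assert (HS : is_RInt f y u (opp I1)) by (apply (is_RInt_swap (V:=R_NormedModule)); exact HI1).
pose proof (is_RInt_Chasles (V:=R_NormedModule) f y u B _ _ HS HI) as K.
unfold minus, plus, opp in K; simpl in K. replace (I - I1) with (Rplus (Ropp I1) I) by ring. exact K.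
Qed.

Lemma pos_div_gt (u z w : R) : 0 < z -> w < u / z -> w * z < u.
Proof.
intros Hz H. assert (E : u = (u / z) * z) by (field; lra).
rewrite E. apply Rmult_lt_compat_r; auto.
Qed.

Lemma pos_div_lt (u z w : R) : 0 < z -> u / z < w -> u < w * z.
Proof.
intros Hz H. assert (E : u = (u / z) * z) by (field; lra).
rewrite E. apply Rmult_lt_compat_r; auto.
Qed.

Section Feas.
Variables (a beta eta nu : R) (f : R -> R).
Hypothesis (Hb : 0 < beta) (He : 0 < eta) (Hn : 0 < nu).
Hypothesis Hf : feasible a beta eta nu f.

Lemma feas_tangent x : a <= x -> eta - nu * (x - a) <= f x.
Proof.
destruct Hf as [Hint [Ha [Hlim [[d [Hd Hdn]] [Hconv Hpos]]]]].
intros Hx. destruct (Req_dec x a) as [->|Hxa]. rewrite Ha; lra.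
assert (Hx' : a < x) by lra.
set (Sx := (f x - f a) / (x - a)).
assert (HS : d <= Sx).
{ destruct (Rle_dec d Sx) as [?|Hn']; auto. exfalso.
  assert (Hp : 0 < d - Sx) by lra.
  pose proof (proj1 (filterlim_locally _ d) Hd (mkposreal _ Hp)) as K.
  destruct K as [del Hdel].
  set (y := a + Rmin (del / 2) (x - a)).
  assert (Hy1 : a < y) by (unfold y; apply Rmin_case; destruct del; simpl; lra).
  assert (Hy2 : y <= x) by (unfold y; generalize (Rmin_r (del/2) (x - a)); lra).
  assert (Hy3 : y - a < del) by (unfold y; generalize (Rmin_l (del/2) (x - a)); destruct del; simpl; lra).
  specialize (Hdel y). rewrite ball_R in Hdel. rewrite ball_R in Hdel.
  assert (Hb1 : Rabs ((f y - f a) / (y - a) - d) < d - Sx).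
  { apply Hdel. rewrite Rabs_right; lra. exact Hy1. }
  apply Rabs_def2 in Hb1. destruct Hb1 as [_ Hb1].
  assert (Hgt : Sx * (y - a) < f y - f a) by (apply pos_div_gt; lra).
  set (t := (y - a) / (x - a)).
  assert (Ht : 0 <= t <= 1).
  { unfold t. split. apply Rmult_le_pos; [lra| left; apply Rinv_0_lt_compat; lra].
    apply (Rmult_le_reg_r (x - a)); [lra|]. field_simplify; lra. }
  pose proof (Hconv x a t Hx (Rle_refl a) Ht) as C.
  replace (t * x + (1 - t) * a) with y in C by (unfold t; field; lra).
  assert (E : Sx * (y - a) = t * (f x - f a)) by (unfold Sx, t; field; lra).
  lra. }
assert (E : f x = f a + Sx * (x - a)) by (unfold Sx; field; lra).
rewrite E, Ha. nra.
Qed.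

Lemma feas_int_ex b : a <= b -> exists I, is_RInt f a b I.
Proof.
intros Hab. destruct Hf as [Hint _].
destruct (gen_extract _ _ _ Hint (mkposreal 1 Rlt_0_1)) as [M0 HM].
destruct (HM (Rmax M0 b + 1)) as [I [HI _]]. generalize (Rmax_l M0 b); lra.
destruct (split_rint f a b _ _ (conj Hab (Rle_trans _ _ _ (Rmax_r M0 b) (Rlt_le _ _ (Rlt_plus_1 _)))) HI) as [I1 [H1 _]].
exists I1; auto.
Qed.

Lemma feas_nonincr x y : a <= x -> x <= y -> f y <= f x.
Proof.
destruct Hf as [Hint [Ha [Hlim [_ [Hconv Hpos]]]]].
intros Hx Hxy. destruct (Rle_dec (f y) (f x)) as [?|Hc]; auto. exfalso.
assert (Hlt : f x < f y) by lra.
assert (Hxy' : x < y) by (destruct (Req_dec x y) as [->|]; lra).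
assert (Hz : forall z, y <= z -> f y <= f z).
{ intros z Hyz. destruct (Req_dec z y) as [->|Hzy]; [lra|].
  set (t := (y - x) / (z - x)).
  assert (Ht : 0 <= t <= 1).
  { unfold t. split. apply Rmult_le_pos; [lra| left; apply Rinv_0_lt_compat; lra].
    apply (Rmult_le_reg_r (z - x)); [lra|]. field_simplify; lra. }
  pose proof (Hconv z x t ltac:(lra) Hx Ht) as C.
  replace (t * z + (1 - t) * x) with y in C by (unfold t; field; lra).
  assert (Htp : 0 < t) by (unfold t; apply Rdiv_lt_0_compat; lra).
  nra. }
assert (Hm : 0 < f y) by (generalize (Hpos x Hx); lra).
destruct (gen_extract _ _ _ Hint (mkposreal 1 Rlt_0_1)) as [M0 HM].
set (B := Rmax M0 y + (beta + 1) / f y + 1).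
assert (HB1 : Rmax M0 y < B).
{ unfold B. assert (0 < (beta + 1) / f y) by (apply Rdiv_lt_0_compat; lra). lra. }
destruct (HM B) as [I [HI Hc']]. generalize (Rmax_l M0 y); lra.
simpl in Hc'. apply Rabs_def2 in Hc'.
destruct (split_rint f a y B I (conj (Rle_trans _ _ _ Hx (Rlt_le _ _ Hxy')) (Rle_trans _ _ _ (Rmax_r M0 y) (Rlt_le _ _ HB1))) HI) as [I1 [H1 H2]].
assert (P1 : 0 <= I1).
{ replace 0 with (0 * (y - a)) by ring.
  apply (rint_le f (fun _ => 0) a y); auto. lra. apply rint_const. intros; apply Hpos; lra. }
assert (P2 : f y * (B - y) <= I - I1).
{ apply (rint_le f (fun _ => f y) y B); auto. generalize (Rmax_r M0 y); lra. apply rint_const.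
  intros; apply Hz; lra. }
assert (P3 : beta + 1 < f y * (B - y)).
{ assert (E : B - y = (Rmax M0 y - y) + (beta + 1) / f y + 1) by (unfold B; ring).
  rewrite E. generalize (Rmax_r M0 y). intro.
  assert (f y * ((beta + 1) / f y) = beta + 1) by (field; lra). nra. }
lra.
Qed.

Lemma feas_lb1 b I : a <= b <= a + eta / nu -> is_RInt f a b I ->
  eta * (b - a) - nu * (b - a) ^ 2 / 2 <= I.
Proof.
intros Hab HI.
replace (eta * (b - a) - nu * (b - a) ^ 2 / 2) with ((2 * eta - nu * (b - a)) * (b - a) / 2) by field.
apply (rint_le f (fun x => eta - nu * (x - a)) a b); auto. lra. apply rint_aff.
intros; apply feas_tangent; lra.
Qed.

Lemma feas_lb2 b I : a + eta / nu <= b -> is_RInt f a b I -> eta ^ 2 / (2 * nu) <= I.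
Proof.
intros Hab HI.
assert (Hmu : 0 < eta / nu) by (apply Rdiv_lt_0_compat; lra).
destruct (split_rint f a (a + eta / nu) b I ltac:(lra) HI) as [I1 [H1 H2]].
pose proof (feas_lb1 (a + eta / nu) I1 ltac:(lra) H1) as L1.
replace (eta * (a + eta / nu - a) - nu * (a + eta / nu - a) ^ 2 / 2) with (eta ^ 2 / (2 * nu)) in L1 by (field; lra).
destruct Hf as [_ [_ [_ [_ [_ Hpos]]]]].
assert (0 * (b - (a + eta / nu)) <= I - I1).
{ apply (rint_le f (fun _ => 0) (a + eta / nu) b); auto. apply rint_const. intros; apply Hpos; lra. }
lra.
Qed.

Lemma feas_lb3 q I : a + eta / nu < q -> is_RInt f a q I -> I <> beta -> eta ^ 2 / (2 * nu) < I.
Proof.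
intros Hq HI Hne.
assert (Hmu : 0 < eta / nu) by (apply Rdiv_lt_0_compat; lra).
pose proof Hf as Hf'. destruct Hf' as [Hint [_ [_ [_ [_ Hpos]]]]].
assert (Hfq : 0 < f q).
{ destruct (Rlt_dec 0 (f q)) as [?|Hc]; auto. exfalso.
  assert (Z : forall z, q <= z -> f z = 0).
  { intros z Hz. generalize (feas_nonincr q z ltac:(lra) Hz) (Hpos z ltac:(lra)) (Hpos q ltac:(lra)). lra. }
  pose proof (zext f q Z) as G1.
  pose proof (tail f a q beta I Hint HI) as G2.
  pose proof (gen_unique f q _ _ G1 G2). lra. }
destruct (split_rint f a (a + eta / nu) q I ltac:(lra) HI) as [I1 [H1 H2]].
pose proof (feas_lb1 (a + eta / nu) I1 ltac:(lra) H1) as L1.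
replace (eta * (a + eta / nu - a) - nu * (a + eta / nu - a) ^ 2 / 2) with (eta ^ 2 / (2 * nu)) in L1 by (field; lra).
assert (f q * (q - (a + eta / nu)) <= I - I1).
{ apply (rint_le f (fun _ => f q) (a + eta / nu) q); auto. lra. apply rint_const.
  intros; apply feas_nonincr; lra. }
assert (0 < f q * (q - (a + eta / nu))) by (apply Rmult_lt_0_compat; lra).
lra.
Qed.

End Feas.

Definition conv (g : R -> R) := forall x y t, 0 <= t <= 1 ->
  g (t * x + (1 - t) * y) <= t * g x + (1 - t) * g y.

Lemma conv_aff c k x0 : conv (fun x => c - k * (x - x0)).
Proof. intros x y t _. apply Req_le. ring. Qed.

Lemma conv_const c : conv (fun _ => c).
Proof. intros x y t _. apply Req_le. ring. Qed.

Lemma conv_max g h : conv g -> conv h -> conv (fun x => Rmax (g x) (h x)).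
Proof.
intros Hg Hh x y t Ht. apply Rmax_lub.
- eapply Rle_trans. apply Hg; auto. apply Rplus_le_compat; apply Rmult_le_compat_l; try lra; apply Rmax_l.
- eapply Rle_trans. apply Hh; auto. apply Rplus_le_compat; apply Rmult_le_compat_l; try lra; apply Rmax_r.
Qed.

Section Fam.
Variables (a beta eta nu c1 s q r : R).
Hypothesis (Hb : 0 < beta) (He : 0 < eta) (Hn : 0 < nu).
Hypothesis (Hc1 : a < c1) (Hq : c1 <= q) (Hr : 0 < r) (Hrs : r <= s) (Hsn : s <= nu).
Let v := eta - nu * (c1 - a).
Let w := v - s * (q - c1).
Hypothesis (Hw : 0 <= w).
Let L := q + w / r.
Definition famF (x : R) := Rmax 0 (Rmax (eta - nu * (x - a)) (Rmax (v - s * (x - c1)) (w - r * (x - q)))).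

Lemma HL : q <= L.
Proof. unfold L. assert (0 <= w / r) by (apply Rmult_le_pos; [lra| left; apply Rinv_0_lt_compat; lra]). lra. Qed.

Lemma rL : r * (L - q) = w.
Proof. unfold L. field. lra. Qed.

Lemma P1 x : a <= x <= c1 -> famF x = eta - nu * (x - a).
Proof.
intros Hx. unfold famF.
assert (E1 : (eta - nu * (x - a)) - (v - s * (x - c1)) = (nu - s) * (c1 - x)) by (unfold v; ring).
assert (E2 : (v - s * (x - c1)) - (w - r * (x - q)) = (s - r) * (q - x)) by (unfold w; ring).
assert (0 <= (nu - s) * (c1 - x)) by (apply Rmult_le_pos; lra).
assert (0 <= (s - r) * (q - x)) by (apply Rmult_le_pos; lra).
assert (E3 : eta - nu * (x - a) = w + s * (q - c1) + nu * (c1 - x)) by (unfold w, v; ring).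
assert (0 <= s * (q - c1)) by (apply Rmult_le_pos; lra).
assert (0 <= nu * (c1 - x)) by (apply Rmult_le_pos; lra).
rewrite (Rmax_left (v - s * (x - c1))) by lra.
rewrite (Rmax_left (eta - nu * (x - a))) by lra.
rewrite Rmax_right by lra. reflexivity.
Qed.

Lemma P2 x : c1 <= x <= q -> famF x = v - s * (x - c1).
Proof.
intros Hx. unfold famF.
assert (E1 : (eta - nu * (x - a)) - (v - s * (x - c1)) = (nu - s) * (c1 - x)) by (unfold v; ring).
assert (E2 : (v - s * (x - c1)) - (w - r * (x - q)) = (s - r) * (q - x)) by (unfold w; ring).
assert (0 <= (nu - s) * (x - c1)) by (apply Rmult_le_pos; lra).
assert (0 <= (s - r) * (q - x)) by (apply Rmult_le_pos; lra).
assert (E3 : v - s * (x - c1) = w + s * (q - x)) by (unfold w; ring).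
assert (0 <= s * (q - x)) by (apply Rmult_le_pos; lra).
rewrite (Rmax_left (v - s * (x - c1))) by lra.
rewrite (Rmax_right (eta - nu * (x - a))) by lra.
rewrite Rmax_right by lra. reflexivity.
Qed.

Lemma P3 x : q <= x <= L -> famF x = w - r * (x - q).
Proof.
intros Hx. unfold famF. pose proof rL.
assert (E1 : (eta - nu * (x - a)) - (v - s * (x - c1)) = (nu - s) * (c1 - x)) by (unfold v; ring).
assert (E2 : (v - s * (x - c1)) - (w - r * (x - q)) = (s - r) * (q - x)) by (unfold w; ring).
assert (0 <= (nu - s) * (x - c1)) by (apply Rmult_le_pos; lra).
assert (0 <= (s - r) * (x - q)) by (apply Rmult_le_pos; lra).
assert (0 <= r * (L - x)) by (apply Rmult_le_pos; lra).
rewrite (Rmax_right (v - s * (x - c1))) by lra.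
rewrite (Rmax_right (eta - nu * (x - a))) by lra.
rewrite Rmax_right by lra. reflexivity.
Qed.

Lemma P4 x : L <= x -> famF x = 0.
Proof.
intros Hx. unfold famF. pose proof rL. pose proof HL.
assert (E1 : (eta - nu * (x - a)) - (v - s * (x - c1)) = (nu - s) * (c1 - x)) by (unfold v; ring).
assert (E2 : (v - s * (x - c1)) - (w - r * (x - q)) = (s - r) * (q - x)) by (unfold w; ring).
assert (0 <= (nu - s) * (x - c1)) by (apply Rmult_le_pos; lra).
assert (0 <= (s - r) * (x - q)) by (apply Rmult_le_pos; lra).
assert (0 <= r * (x - L)) by (apply Rmult_le_pos; lra).
rewrite (Rmax_right (v - s * (x - c1))) by lra.
rewrite (Rmax_right (eta - nu * (x - a))) by lra.
rewrite Rmax_left by lra. reflexivity.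
Qed.

Lemma fam_le_v x : c1 <= x -> famF x <= v.
Proof.
intros Hx. pose proof HL.
destruct (Rle_dec x q). rewrite P2 by lra. assert (0 <= s * (x - c1)) by (apply Rmult_le_pos; lra). lra.
destruct (Rle_dec x L). rewrite P3 by lra. assert (0 <= r * (x - q)) by (apply Rmult_le_pos; lra).
assert (0 <= s * (q - c1)) by (apply Rmult_le_pos; lra). unfold w in *. lra.
rewrite P4 by lra. assert (0 <= s * (q - c1)) by (apply Rmult_le_pos; lra). unfold w in *. lra.
Qed.

Lemma int1 : is_RInt famF a c1 ((2 * eta - nu * (c1 - a)) * (c1 - a) / 2).
Proof.
apply is_RInt_ext with (fun x => eta - nu * (x - a)).
intros x Hx. rewrite Rmin_left, Rmax_right in Hx by lra. rewrite P1 by lra. reflexivity.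
apply rint_aff.
Qed.

Lemma int2 : is_RInt famF c1 q ((2 * v - s * (q - c1)) * (q - c1) / 2).
Proof.
apply is_RInt_ext with (fun x => v - s * (x - c1)).
intros x Hx. rewrite Rmin_left, Rmax_right in Hx by lra. rewrite P2 by lra. reflexivity.
apply rint_aff.
Qed.

Lemma int3 : is_RInt famF q L ((2 * w - r * (L - q)) * (L - q) / 2).
Proof.
pose proof HL.
apply is_RInt_ext with (fun x => w - r * (x - q)).
intros x Hx. rewrite Rmin_left, Rmax_right in Hx by lra. rewrite P3 by lra. reflexivity.
apply rint_aff.
Qed.

Definition famI := (2 * eta - nu * (c1 - a)) * (c1 - a) / 2 + (2 * v - s * (q - c1)) * (q - c1) / 2.

Lemma int12 : is_RInt famF a q famI.
Proof.
pose proof (is_RInt_Chasles (V:=R_NormedModule) famF a c1 q _ _ int1 int2) as K.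
exact K.
Qed.

Hypothesis Htot : famI + w ^ 2 / (2 * r) = beta.

Lemma fam_feasible : feasible a beta eta nu famF.
Proof.
pose proof HL. pose proof rL.
split; [|split; [|split; [|split; [|split]]]].
- assert (K : is_RInt famF a L beta).
  { pose proof (is_RInt_Chasles (V:=R_NormedModule) famF a q L _ _ int12 int3) as K.
    replace beta with (plus famI ((2 * w - r * (L - q)) * (L - q) / 2)). exact K.
    unfold plus; simpl. rewrite <- Htot. unfold L. field. lra. }
  pose proof (zext famF L P4) as Z.
  apply (is_RInt_gen_at_point (V:=R_NormedModule)) in K.
  pose proof (is_RInt_gen_Chasles famF L _ _ K Z) as G.
  replace beta with (plus beta 0). exact G. unfold plus; simpl; ring.
- rewrite P1 by lra. ring.
- apply filterlim_locally. intros eps.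
  assert (Hp : 0 < Rmin (c1 - a) (eps / nu)).
  { apply Rmin_case. lra. apply Rdiv_lt_0_compat; [destruct eps; simpl; lra | lra]. }
  exists (mkposreal _ Hp). intros y Hy Hay. simpl in Hy. rewrite ball_R in Hy. rewrite ball_R.
  rewrite Rabs_right in Hy by lra.
  assert (y - a < c1 - a) by (generalize (Rmin_l (c1 - a) (eps / nu)); lra).
  assert (Hye : y - a < eps / nu) by (generalize (Rmin_r (c1 - a) (eps / nu)); lra).
  apply (Rmult_lt_compat_l nu) in Hye; [|lra].
  replace (nu * (eps / nu)) with (pos eps) in Hye by (field; lra).
  rewrite P1 by lra.
  replace (eta - nu * (y - a) - eta) with (- (nu * (y - a))) by ring.
  rewrite Rabs_Ropp, Rabs_right by nra. exact Hye.
- exists (- nu). split; [|lra].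
  apply filterlim_ext_loc with (fun _ => - nu).
  + exists (mkposreal (c1 - a) ltac:(lra)). intros y Hy Hay. simpl in Hy. rewrite ball_R in Hy.
    rewrite Rabs_right in Hy by lra.
    rewrite !P1 by lra. field. lra.
  + apply filterlim_const.
- intros x y t Hx Hy Ht. unfold famF.
  apply (conv_max (fun _ => 0) (fun x => Rmax (eta - nu * (x - a)) (Rmax (v - s * (x - c1)) (w - r * (x - q))))); auto.
  apply conv_const. apply conv_max. apply conv_aff. apply conv_max; apply conv_aff.
- intros x _. unfold famF. apply Rmax_l.
Qed.

End Fam.

Section Cons.
Variables (a beta eta nu : R).
Hypothesis (Hb : 0 < beta) (He : 0 < eta) (Hn : 0 < nu) (HM : eta ^ 2 < 2 * beta * nu).

Lemma Mlt : eta ^ 2 / (2 * nu) < beta.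
Proof. apply (Rmult_lt_reg_r (2 * nu)); [lra|]. field_simplify; lra. Qed.

Lemma C1 t : 0 < t < eta / nu -> exists f, feasible a beta eta nu f /\
  is_RInt f a (a + t) (eta * t - nu * t ^ 2 / 2) /\
  (forall x, a + t <= x -> f x <= eta - nu * t).
Proof.
intros Ht. pose proof Mlt as HMl.
assert (Hv : 0 < eta - nu * t).
{ destruct Ht as [_ Ht]. apply (Rmult_lt_compat_l nu) in Ht; [|lra].
  replace (nu * (eta / nu)) with eta in Ht by (field; lra). lra. }
set (P := eta * t - nu * t ^ 2 / 2).
assert (HP : P + (eta - nu * t) ^ 2 / (2 * nu) = eta ^ 2 / (2 * nu)) by (unfold P; field; lra).
assert (HP2 : 0 < beta - P) by (assert (0 <= (eta - nu * t) ^ 2 / (2 * nu)) by (apply Rmult_le_pos; [nra| left; apply Rinv_0_lt_compat; lra]); lra).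
set (r := (eta - nu * t) ^ 2 / (2 * (beta - P))).
assert (Hr : 0 < r) by (unfold r; apply Rdiv_lt_0_compat; [apply pow_lt; nra | lra]).
assert (Hrn : r <= nu).
{ unfold r. apply (Rmult_le_reg_r (2 * (beta - P))); [lra|].
  replace ((eta - nu * t) ^ 2 / (2 * (beta - P)) * (2 * (beta - P))) with ((eta - nu * t) ^ 2) by (field; lra).
  assert ((eta - nu * t) ^ 2 = 2 * nu * (eta ^ 2 / (2 * nu) - P)) by (rewrite <- HP; field; lra).
  nra. }
assert (Hw : 0 <= eta - nu * (a + t - a) - r * (a + t - (a + t))) by (ring_simplify; lra).
assert (Htot : famI a eta nu (a + t) r (a + t) + (eta - nu * (a + t - a) - r * (a + t - (a + t))) ^ 2 / (2 * r) = beta).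
{ unfold famI, r. unfold P in *. field. split; [lra|]. intro Z. nra. }
exists (famF a eta nu (a + t) r (a + t) r). split; [|split].
- apply (fam_feasible a beta eta nu (a + t) r (a + t) r); auto; lra.
- replace P with (famI a eta nu (a + t) r (a + t)).
  apply int12; auto; lra. unfold famI, P. field.
- intros x Hx. eapply Rle_trans. apply (fam_le_v a eta nu (a + t) r (a + t) r); auto; lra.
  right; ring.
Qed.

Lemma mu_pos : 0 < eta / nu.
Proof. apply Rdiv_lt_0_compat; lra. Qed.

Lemma C1b (t b I : R) : 0 < t < eta / nu -> a + t <= b -> forall f : R -> R, is_RInt f a (a + t) (eta * t - nu * t ^ 2 / 2) ->
  (forall x, a + t <= x -> f x <= eta - nu * t) -> is_RInt f a b I ->
  I <= eta * t - nu * t ^ 2 / 2 + (eta - nu * t) * (b - (a + t)).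
Proof.
intros Ht Hb' f H1 H2 HI.
destruct (split_rint f a (a + t) b I ltac:(lra) HI) as [I1 [HI1 HI2]].
assert (I1 = eta * t - nu * t ^ 2 / 2).
{ rewrite <- (is_RInt_unique _ _ _ _ HI1). rewrite (is_RInt_unique _ _ _ _ H1). reflexivity. }
assert (I - I1 <= (eta - nu * t) * (b - (a + t))).
{ apply (rint_le (fun _ => eta - nu * t) f (a + t) b); auto. apply rint_const. intros; apply H2; lra. }
lra.
Qed.

Lemma C3 b eps : a <= b -> 0 < eps -> exists f I, feasible a beta eta nu f /\ is_RInt f a b I /\ I <= eta ^ 2 / (2 * nu) + eps.
Proof.
intros Hab He'. pose proof mu_pos as Hmu.
set (del := Rmin (eta / nu / 2) (eps / (nu * (b - a) + 1))).
assert (Hnb : 0 <= nu * (b - a)) by (apply Rmult_le_pos; lra).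
assert (Hd : 0 < del) by (unfold del; apply Rmin_case; [lra| apply Rdiv_lt_0_compat; lra]).
assert (Hd1 : del <= eta / nu / 2) by apply Rmin_l.
assert (Hd2 : del <= eps / (nu * (b - a) + 1)) by apply Rmin_r.
set (t := eta / nu - del).
destruct (C1 t ltac:(unfold t; lra)) as [f [Hf [H1 H2]]].
assert (Hbt : a + t <= b \/ b < a + t) by lra.
destruct (feas_int_ex a beta eta nu f Hf b Hab) as [I HI].
exists f, I. split; auto. split; auto.
assert (HPhi : eta * t - nu * t ^ 2 / 2 = eta ^ 2 / (2 * nu) - nu * del ^ 2 / 2) by (unfold t; field; lra).
assert (Hv : eta - nu * t = nu * del) by (unfold t; field; lra).
assert (Hdel2 : nu * del * (b - a) <= eps).
{ apply (Rmult_le_compat_l (nu * (b - a))) in Hd2; [|lra].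
  replace (nu * (b - a) * (eps / (nu * (b - a) + 1))) with (eps * (nu * (b - a) / (nu * (b - a) + 1))) in Hd2 by (field; lra).
  assert (nu * (b - a) / (nu * (b - a) + 1) <= 1).
  { apply (Rmult_le_reg_r (nu * (b - a) + 1)); [lra|]. field_simplify; lra. }
  nra. }
destruct Hbt as [Hbt|Hbt].
- pose proof (C1b t b I ltac:(unfold t; lra) Hbt f H1 H2 HI) as K.
  rewrite HPhi, Hv in K. assert (0 <= nu * del ^ 2 / 2) by (apply Rmult_le_pos; [nra|lra]).
  assert (nu * del * (b - (a + t)) <= nu * del * (b - a)) by (apply Rmult_le_compat_l; [nra| unfold t; lra]).
  lra.
-
  pose proof (feas_lb1 a beta eta nu f Hf b I ltac:(unfold t in *; lra) HI) as K.
  (* need an upper bound: use I <= integral on [a, a+t] part *)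
  destruct (split_rint f a b (a + t) _ (conj Hab (Rlt_le _ _ Hbt)) H1) as [I1 [HI1 HI2]].
  assert (I1 = I) by (rewrite <- (is_RInt_unique _ _ _ _ HI1); rewrite (is_RInt_unique _ _ _ _ HI); reflexivity).
  destruct Hf as [_ [_ [_ [_ [_ Hpos]]]]].
  assert (0 * (a + t - b) <= eta * t - nu * t ^ 2 / 2 - I1).
  { apply (rint_le f (fun _ => 0) b (a + t)); auto. lra. apply rint_const. intros; apply Hpos; lra. }
  assert (0 <= nu * del ^ 2 / 2) by (apply Rmult_le_pos; [nra|lra]).
  lra.
Qed.

Lemma C4 del : 0 < del -> del <= eta / nu / 4 -> del <= 1 ->
  del <= 2 * (beta - eta ^ 2 / (2 * nu)) / (3 * nu) ->
  exists f, feasible a beta eta nu f /\ is_RInt f a (a + eta / nu - del) (eta ^ 2 / (2 * nu)).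
Proof.
intros Hd Hd1 Hd2 Hd3. pose proof mu_pos as Hmu. pose proof Mlt as HMl.
set (c1 := a + (eta / nu - 3 * del)).
set (s := 3 * nu / 4).
set (q := a + eta / nu - del).
set (r := (3 * nu * del / 2) ^ 2 / (2 * (beta - eta ^ 2 / (2 * nu)))).
assert (Hw : eta - nu * (c1 - a) - s * (q - c1) = 3 * nu * del / 2) by (unfold c1, s, q; field; lra).
assert (Hr : 0 < r) by (unfold r; apply Rdiv_lt_0_compat; [apply pow_lt; nra | lra]).
assert (Hrs : r <= s).
{ unfold r, s. apply (Rmult_le_reg_r (2 * (beta - eta ^ 2 / (2 * nu)))); [lra|].
  replace ((3 * nu * del / 2) ^ 2 / (2 * (beta - eta ^ 2 / (2 * nu))) * (2 * (beta - eta ^ 2 / (2 * nu))))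
    with (9 * nu ^ 2 * del ^ 2 / 4) by (field; lra).
  apply (Rmult_le_compat_l (3 * nu)) in Hd3; [|lra].
  replace (3 * nu * (2 * (beta - eta ^ 2 / (2 * nu)) / (3 * nu))) with (2 * (beta - eta ^ 2 / (2 * nu))) in Hd3 by (field; lra).
  assert (del ^ 2 <= del) by nra. nra. }
assert (HI : famI a eta nu c1 s q = eta ^ 2 / (2 * nu)) by (unfold famI, c1, s, q; field; lra).
exists (famF a eta nu c1 s q r). split.
- apply (fam_feasible a beta eta nu c1 s q r); auto; try (unfold c1, q, s; lra).
  rewrite Hw; nra.
  rewrite Hw, HI. unfold r. field. split; [lra|]. nra.
- rewrite <- HI. apply int12; auto; try (unfold c1, q, s; lra). rewrite Hw; nra.
Qed.

Lemma C5gen T D w r : 0 < 2 * nu * T - eta ^ 2 -> 0 < D -> eta < nu * D -> 2 * T < eta * D -> 0 <= w ->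
  0 < r -> r * (nu * D ^ 2 - 2 * eta * D + 2 * T) <= 2 * nu * T - eta ^ 2 + 2 * eta * w - 2 * nu * w * D - w ^ 2 ->
  T + w ^ 2 / (2 * r) = beta ->
  exists f, feasible a beta eta nu f /\ is_RInt f a (a + D) T.
Proof.
intros HK HD HD1 HD2 Hw Hr Hrs Htot.
set (E := nu * D + w - eta).
set (G := nu * D ^ 2 - 2 * eta * D + 2 * T).
set (Nn := 2 * nu * T - eta ^ 2 + 2 * eta * w - 2 * nu * w * D - w ^ 2).
assert (HE : 0 < E) by (unfold E; lra).
assert (HG : 0 < G).
{ assert (nu * G = (nu * D - eta) ^ 2 + (2 * nu * T - eta ^ 2)) by (unfold G; ring).
  assert (0 <= (nu * D - eta) ^ 2) by nra. nra. }
set (t1 := ((eta + w) * D - 2 * T) / E).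
set (s := Nn / G).
assert (Ht1 : 0 < t1) by (unfold t1; apply Rdiv_lt_0_compat; nra).
assert (HDt : D - t1 = G / E) by (unfold t1, G, E; field; lra).
assert (HDt' : 0 < D - t1) by (rewrite HDt; apply Rdiv_lt_0_compat; lra).
assert (Hrs' : r <= s).
{ unfold s. apply (Rmult_le_reg_r G); [lra|]. replace (Nn / G * G) with Nn by (field; lra). exact Hrs. }
assert (Hsn : s <= nu).
{ unfold s. apply (Rmult_le_reg_r G); [lra|]. replace (Nn / G * G) with Nn by (field; lra).
  assert (nu * G - Nn = (nu * D - eta + w) ^ 2) by (unfold G, Nn; ring). nra. }
assert (Hwf : eta - nu * (a + t1 - a) - s * (a + D - (a + t1)) = w).
{ replace (a + D - (a + t1)) with (G / E) by (rewrite <- HDt; ring). unfold s, t1, Nn, G, E. field. split; [unfold E in HE; lra | unfold G in HG; lra]. }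
assert (HIf : famI a eta nu (a + t1) s (a + D) = T).
{ unfold famI. replace (a + D - (a + t1)) with (G / E) by (rewrite <- HDt; ring).
  replace (a + t1 - a) with t1 by ring. unfold s, t1, Nn, G, E. field. split; [unfold E in HE; lra | unfold G in HG; lra]. }
exists (famF a eta nu (a + t1) s (a + D) r). split.
- apply (fam_feasible a beta eta nu (a + t1) s (a + D) r); auto; try lra.
  rewrite Hwf, HIf. exact Htot.
- rewrite <- HIf. apply int12; auto; lra.
Qed.

Lemma C5 T N : eta ^ 2 / (2 * nu) < T -> T <= beta ->
  exists q, N <= q /\ a <= q /\ exists f, feasible a beta eta nu f /\ is_RInt f a q T.
Proof.
intros HT HTb.
assert (HK : 0 < 2 * nu * T - eta ^ 2).
{ apply (Rmult_lt_compat_l (2 * nu)) in HT; [|lra].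
  replace (2 * nu * (eta ^ 2 / (2 * nu))) with (eta ^ 2) in HT by (field; lra). lra. }
set (K := 2 * nu * T - eta ^ 2) in *.
assert (HT0 : 0 < T) by (assert (0 <= eta ^ 2 / (2 * nu)) by (apply Rmult_le_pos; [nra| left; apply Rinv_0_lt_compat; lra]); lra).
assert (Hen : 0 < eta / nu) by (apply Rdiv_lt_0_compat; lra).
assert (HTe : 0 < 2 * T / eta) by (apply Rdiv_lt_0_compat; lra).
assert (HTn : 0 < 2 * T / nu) by (apply Rdiv_lt_0_compat; lra).
assert (HNa : 0 <= Rabs (N - a)) by apply Rabs_pos.
assert (HNa' : N - a <= Rabs (N - a)) by apply RRle_abs.
destruct (Rlt_dec T beta) as [HR|HR].
- set (R0 := beta - T).
  assert (HR0 : 0 < R0) by (unfold R0; lra).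
  set (k := Rmin (K / (4 * nu)) R0).
  assert (Hk1 : k <= K / (4 * nu)) by apply Rmin_l.
  assert (Hk2 : k <= R0) by apply Rmin_r.
  assert (Hk0 : 0 < k) by (unfold k; apply Rmin_case; [apply Rdiv_lt_0_compat; lra | lra]).
  assert (Hk3 : 0 < 4 * k / K) by (apply Rdiv_lt_0_compat; lra).
  set (D := 1 + Rabs (N - a) + eta / nu + 2 * T / eta + 2 * T / nu + k + 4 * k / K).
  assert (HD0 : 0 < D) by (unfold D; lra).
  assert (HD1 : eta < nu * D).
  { assert (eta / nu < D) by (unfold D; lra). rewrite Rmult_comm. apply pos_div_lt; lra. }
  assert (HD2 : 2 * T < eta * D).
  { assert (2 * T / eta < D) by (unfold D; lra). rewrite (Rmult_comm eta D). apply pos_div_lt; lra. }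
  assert (HD3 : 2 * T <= nu * D ^ 2).
  { assert (2 * T / nu < D) by (unfold D; lra). assert (2 * T < D * nu) by (apply pos_div_lt; lra).
    assert (1 <= D) by (unfold D; lra). nra. }
  set (w := k / D).
  assert (HwD : w * D = k) by (unfold w; field; lra).
  assert (Hw0 : 0 < w) by (unfold w; apply Rdiv_lt_0_compat; lra).
  assert (Hw1 : w <= 1).
  { assert (k < D) by (unfold D; lra). nra. }
  assert (Hw2 : w <= K / 4).
  { assert (4 * k / K < D) by (unfold D; lra). assert (4 * k < D * K) by (apply pos_div_lt; lra). nra. }
  set (r := w ^ 2 / (2 * R0)).
  assert (Hr0 : 0 < r) by (unfold r; apply Rdiv_lt_0_compat; [apply pow_lt|]; lra).
  destruct (C5gen T D w r HK HD0 HD1 HD2 ltac:(lra) Hr0) as [f [Hf HI]].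
  +
    assert (HG : nu * D ^ 2 - 2 * eta * D + 2 * T <= 2 * nu * D ^ 2) by nra.
    assert (HrD : r * (2 * nu * D ^ 2) = nu * k ^ 2 / R0).
    { unfold r. rewrite <- HwD. field. repeat split; lra. }
    assert (Hk4 : nu * k ^ 2 / R0 <= K / 4).
    { apply (Rmult_le_reg_r R0); [lra|]. replace (nu * k ^ 2 / R0 * R0) with (nu * k ^ 2) by (field; lra).
      assert (4 * nu * k <= K).
      { apply (Rmult_le_compat_l (4 * nu)) in Hk1; [|lra].
        replace (4 * nu * (K / (4 * nu))) with K in Hk1 by (field; lra). lra. }
      nra. }
    assert (Hnk : 2 * nu * w * D = 2 * nu * k) by (rewrite <- HwD; ring).
    assert (4 * nu * k <= K).
    { apply (Rmult_le_compat_l (4 * nu)) in Hk1; [|lra].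
      replace (4 * nu * (K / (4 * nu))) with K in Hk1 by (field; lra). lra. }
    assert (w ^ 2 <= K / 4) by nra.
    assert (r * (nu * D ^ 2 - 2 * eta * D + 2 * T) <= r * (2 * nu * D ^ 2)) by (apply Rmult_le_compat_l; lra).
    assert (0 <= 2 * eta * w) by nra.
    unfold K in *. lra.
  + assert (Hw2p : 0 < w ^ 2) by (apply pow_lt; lra).
    unfold r. replace (w ^ 2 / (2 * (w ^ 2 / (2 * R0)))) with R0 by (field; repeat split; lra). unfold R0; ring.
  + exists (a + D). split; [unfold D; lra|]. split; [lra|]. exists f. split; auto.
- assert (HTb' : T = beta) by lra.
  set (D := 1 + Rabs (N - a) + eta / nu + 2 * T / eta).
  assert (HD0 : 0 < D) by (unfold D; lra).
  assert (HD1 : eta < nu * D).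
  { assert (eta / nu < D) by (unfold D; lra). rewrite Rmult_comm. apply pos_div_lt; lra. }
  assert (HD2 : 2 * T < eta * D).
  { assert (2 * T / eta < D) by (unfold D; lra). rewrite (Rmult_comm eta D). apply pos_div_lt; lra. }
  set (G := nu * D ^ 2 - 2 * eta * D + 2 * T).
  assert (HG : 0 < G).
  { assert (nu * G = (nu * D - eta) ^ 2 + K) by (unfold G, K; ring).
    assert (0 <= (nu * D - eta) ^ 2) by nra. nra. }
  set (r := K / G).
  assert (Hr0 : 0 < r) by (unfold r; apply Rdiv_lt_0_compat; lra).
  destruct (C5gen T D 0 r HK HD0 HD1 HD2 ltac:(lra) Hr0) as [f [Hf HI]].
  + replace (r * (nu * D ^ 2 - 2 * eta * D + 2 * T)) with K. unfold K; right; ring.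
    unfold r. fold G. field. lra.
  + rewrite HTb'. field. lra.
  + exists (a + D). split; [unfold D; lra|]. split; [lra|]. exists f. split; auto.
Qed.

End Cons.

Section Main.
Variables (a beta eta nu : R).
Hypothesis (Hb : 0 < beta) (He : 0 < eta) (Hn : 0 < nu) (HM : eta ^ 2 < 2 * beta * nu).

Let Phi (t : R) := eta * t - nu * t ^ 2 / 2.
Let mu := eta / nu.
Let Mv := eta ^ 2 / (2 * nu).

Lemma Phi_lt x y : 0 <= x -> x < y -> y <= eta / nu -> Phi x < Phi y.
Proof.
intros H1 H2 H3. unfold Phi.
assert (nu * y <= eta) by (apply (Rmult_le_compat_l nu) in H3; [|lra]; replace (nu * (eta / nu)) with eta in H3 by (field; repeat split; lra); lra).
assert (E : eta * y - nu * y ^ 2 / 2 - (eta * x - nu * x ^ 2 / 2) = (y - x) * (eta - nu * (x + y) / 2)) by field.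
assert (0 < (y - x) * (eta - nu * (x + y) / 2)) by (apply Rmult_lt_0_compat; nra).
lra.
Qed.

Lemma Phi_le x : Phi x <= Mv.
Proof.
unfold Phi, Mv.
assert (E : eta ^ 2 / (2 * nu) - (eta * x - nu * x ^ 2 / 2) = (eta - nu * x) ^ 2 / (2 * nu)) by (field; repeat split; lra).
assert (0 <= (eta - nu * x) ^ 2 / (2 * nu)) by (apply Rmult_le_pos; [apply pow2_ge_0| left; apply Rinv_0_lt_compat; lra]).
lra.
Qed.

Lemma Phi_mu : Phi (eta / nu) = Mv.
Proof. unfold Phi, Mv. field. lra. Qed.

Lemma tail_val f b v : a <= b -> feasible a beta eta nu f ->
  is_RInt_gen f (at_point b) (Rbar_locally p_infty) v ->
  exists I, is_RInt f a b I /\ v = beta - I.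
Proof.
intros Hab Hf Hv. destruct (feas_int_ex a beta eta nu f Hf b Hab) as [I HI].
exists I. split; auto. destruct Hf as [Hint _].
apply (gen_unique f b v (beta - I)). exact Hv. apply (tail f a b beta I Hint HI).
Qed.

Lemma some_feas : exists f, feasible a beta eta nu f.
Proof.
assert (Hmu : 0 < eta / nu) by (apply Rdiv_lt_0_compat; lra).
destruct (C1 a beta eta nu Hn HM (eta / nu / 2) ltac:(lra)) as [f [Hf _]]. eauto.
Qed.

Lemma zero_int f : is_RInt f a a 0.
Proof. apply (is_RInt_point (V:=R_NormedModule)). Qed.

Lemma Z1 b : a <= b < a + eta / nu -> zstar a beta eta nu b = Finite (beta - Phi (b - a)).
Proof.
intros Hab. apply is_lub_Rbar_unique. split.
- intros v [f [Hf Hv]]. destruct (tail_val f b v ltac:(lra) Hf Hv) as [I [HI ->]].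
  simpl. pose proof (feas_lb1 a beta eta nu f Hf b I ltac:(lra) HI). unfold Phi. lra.
- intros u Hu.
  assert (Hin : exists f, feasible a beta eta nu f /\ is_RInt f a b (Phi (b - a))).
  { destruct (Req_dec b a) as [->|Hba].
    - destruct some_feas as [f Hf]. exists f. split; auto.
      replace (Phi (a - a)) with 0 by (unfold Phi; field). apply zero_int.
    - destruct (C1 a beta eta nu Hn HM (b - a) ltac:(lra)) as [f [Hf [H1 _]]].
      exists f. split; auto. replace b with (a + (b - a)) at 1 by ring. exact H1. }
  destruct Hin as [f [Hf HI]].
  apply Hu. exists f. split; auto. destruct Hf as [Hint _]. apply (tail f a b beta _ Hint HI).
Qed.

Lemma Z2 b : a + eta / nu <= b -> zstar a beta eta nu b = Finite (beta - Mv).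
Proof.
intros Hab. assert (Hmu : 0 < eta / nu) by (apply Rdiv_lt_0_compat; lra).
apply is_lub_Rbar_unique. split.
- intros v [f [Hf Hv]]. destruct (tail_val f b v ltac:(lra) Hf Hv) as [I [HI ->]].
  simpl. pose proof (feas_lb2 a beta eta nu f He Hn Hf b I ltac:(lra) HI). unfold Mv. lra.
- intros u Hu.
  assert (Hel : forall eps, 0 < eps -> Rbar_le (beta - Mv - eps) u).
  { intros eps Heps. destruct (C3 a beta eta nu He Hn HM b eps ltac:(lra) Heps) as [f [I [Hf [HI Hle]]]].
    eapply Rbar_le_trans with (Finite (beta - I)). simpl. unfold Mv. lra.
    apply Hu. exists f. split; auto. destruct Hf as [Hint _]. apply (tail f a b beta _ Hint HI). }
  destruct u as [u| |].
  + simpl. apply Rle_plus_epsilon. intros eps Heps. specialize (Hel eps Heps). simpl in Hel. lra.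
  + simpl; auto.
  + specialize (Hel 1 Rlt_0_1). simpl in Hel. contradiction.
Qed.

Lemma Zfin b : a <= b -> exists z, zstar a beta eta nu b = Finite (beta - z) /\ z <= Mv /\
   (b < a + eta / nu -> z = Phi (b - a)) /\ (a + eta / nu <= b -> z = Mv).
Proof.
intros Hab. destruct (Rlt_dec b (a + eta / nu)) as [H|H].
- exists (Phi (b - a)). rewrite Z1 by lra. repeat split; auto. apply Phi_le. intros; lra.
- exists Mv. rewrite Z2 by lra. repeat split; auto. lra. intros; lra.
Qed.

End Main.

Definition PhiD (eta nu t : R) := eta * t - nu * t ^ 2 / 2.

Section Final.
Variables (a beta eta nu p : R).
Hypothesis (Hb : 0 < beta) (He : 0 < eta) (Hn : 0 < nu) (HM : eta ^ 2 < 2 * beta * nu) (Hp : 1 - beta <= p <= 1).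

Let T := p - (1 - beta).
Let Mv := eta ^ 2 / (2 * nu).
Let mu := eta / nu.
Let ts := eta / nu - sqrt ((eta / nu) ^ 2 - 2 * beta / nu + 2 * (1 - p) / nu).

Lemma mu_pos' : 0 < mu.
Proof. unfold mu; apply Rdiv_lt_0_compat; lra. Qed.

Lemma Mlt' : Mv < beta.
Proof. apply Mlt; auto. Qed.

Lemma Phi_lt' x y : 0 <= x -> x < y -> y <= mu -> PhiD eta nu x < PhiD eta nu y.
Proof. intros. pose proof (Phi_lt eta nu Hn x y H H0 H1). exact H2. Qed.

Lemma ts_facts : T <= Mv -> 0 <= ts <= mu /\ PhiD eta nu ts = T /\ (T < Mv -> ts < mu).
Proof.
intros HT. pose proof mu_pos' as Hmu.
set (X := (eta / nu) ^ 2 - 2 * beta / nu + 2 * (1 - p) / nu).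
assert (HX : X = mu ^ 2 - 2 * T / nu) by (unfold X, mu, T; field; lra).
assert (HX0 : 0 <= X).
{ rewrite HX. unfold Mv in HT.
  assert (2 * nu * T <= eta ^ 2).
  { apply (Rmult_le_compat_l (2 * nu)) in HT; [|lra]. replace (2 * nu * (eta ^ 2 / (2 * nu))) with (eta ^ 2) in HT by (field; lra). lra. }
  assert (E : mu ^ 2 - 2 * T / nu = (eta ^ 2 - 2 * nu * T) / nu ^ 2) by (unfold mu; field; lra).
  rewrite E. apply Rmult_le_pos; [lra| left; apply Rinv_0_lt_compat; nra]. }
set (S := sqrt X).
assert (HS : S * S = X) by (apply sqrt_sqrt; auto).
assert (HS0 : 0 <= S) by apply sqrt_pos.
assert (HT0 : 0 <= T) by (unfold T; lra).
assert (HT0' : 0 <= 2 * T / nu) by (apply Rmult_le_pos; [lra| left; apply Rinv_0_lt_compat; lra]).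
assert (HSm : S <= mu) by nra.
unfold ts. fold X. fold S. fold mu. split; [lra|]. split.
- unfold PhiD.
  assert (E : eta * (mu - S) - nu * (mu - S) ^ 2 / 2 - T = - nu / 2 * (S * S - (mu ^ 2 - 2 * T / nu))) by (unfold mu; field; lra).
  rewrite HS, HX in E. lra.
- intros HT'. assert (0 < X).
  { rewrite HX. unfold Mv in HT'.
    assert (2 * nu * T < eta ^ 2).
    { apply (Rmult_lt_compat_l (2 * nu)) in HT'; [|lra]. replace (2 * nu * (eta ^ 2 / (2 * nu))) with (eta ^ 2) in HT' by (field; lra). lra. }
    assert (E : mu ^ 2 - 2 * T / nu = (eta ^ 2 - 2 * nu * T) / nu ^ 2) by (unfold mu; field; lra).
    rewrite E. apply Rdiv_lt_0_compat; nra. }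
  assert (0 < S) by (apply sqrt_lt_R0; auto). lra.
Qed.

Lemma zZ1 b : a <= b < a + mu -> zstar a beta eta nu b = Finite (beta - PhiD eta nu (b - a)).
Proof. intros H. rewrite (Z1 a beta eta nu He Hn HM b H). reflexivity. Qed.

Lemma zZ2 b : a + mu <= b -> zstar a beta eta nu b = Finite (beta - Mv).
Proof. intros H. rewrite (Z2 a beta eta nu He Hn HM b H). reflexivity. Qed.

Lemma qstar_le : T <= Mv -> qstar a beta eta nu p = Finite (a + ts).
Proof.
intros HT. destruct (ts_facts HT) as [[Ht0 Htm] [HPhi Hlt]]. pose proof mu_pos' as Hmu.
apply is_glb_Rbar_unique. split.
- intros b [Hab Hz]. simpl. destruct (Rle_dec (a + ts) b) as [?|Hc]; auto. exfalso.
  rewrite zZ1 in Hz by lra. injection Hz as Hz.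
  pose proof (Phi_lt' (b - a) ts ltac:(lra) ltac:(lra) Htm). unfold T in HPhi. lra.
- intros l Hl. apply Hl. split; [lra|].
  destruct (Rlt_dec ts mu) as [H|H].
  + rewrite zZ1 by lra. replace (a + ts - a) with ts by ring. rewrite HPhi. unfold T. f_equal; ring.
  + rewrite zZ2 by lra. assert (ts = mu) by lra. subst.
    assert (PhiD eta nu mu = Mv) by (unfold PhiD, Mv, mu; field; lra).
    f_equal. rewrite H0 in HPhi. unfold T in HPhi. lra.
Qed.

Lemma qstar_gt : Mv < T -> qstar a beta eta nu p = p_infty.
Proof.
intros HT. apply is_glb_Rbar_unique. split.
- intros b [Hab Hz]. exfalso.
  destruct (Zfin a beta eta nu He Hn HM b Hab) as [z [Hz' [Hzm _]]].
  rewrite Hz' in Hz. injection Hz as Hz. unfold Mv, T in *. lra.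
- intros l _. destruct l; simpl; auto.
Qed.

Definition Qset := fun q => a <= q /\ exists f, feasible a beta eta nu f /\ is_RInt f a q (p - (1 - beta)).

Lemma quant_lt : T < Mv -> quantile_value a beta eta nu p = Finite (a + ts).
Proof.
intros HT. destruct (ts_facts (Rlt_le _ _ HT)) as [[Ht0 Htm] [HPhi Hlt]]. specialize (Hlt HT).
pose proof mu_pos' as Hmu.
apply is_lub_Rbar_unique. split.
- intros q [Haq [f [Hf HI]]]. simpl. destruct (Rle_dec q (a + ts)) as [?|Hc]; auto. exfalso.
  destruct (Rle_dec q (a + mu)) as [Hq|Hq].
  + pose proof (feas_lb1 a beta eta nu f Hf q _ ltac:(unfold mu in Hq; lra) HI).
    pose proof (Phi_lt' ts (q - a) Ht0 ltac:(lra) ltac:(lra)).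
    unfold PhiD in *. unfold T in HPhi. lra.
  + pose proof (feas_lb2 a beta eta nu f He Hn Hf q _ ltac:(unfold mu in Hq; lra) HI).
    unfold Mv, T in *. lra.
- intros u Hu. apply Hu. split; [lra|].
  destruct (Req_dec ts 0) as [Z|Z].
  + destruct (some_feas a beta eta nu He Hn HM) as [f Hf]. exists f. split; auto.
    rewrite Z, Rplus_0_r. replace (p - (1 - beta)) with 0. apply zero_int.
    rewrite Z in HPhi. unfold PhiD in HPhi. unfold T in HPhi. lra.
  + destruct (C1 a beta eta nu Hn HM ts ltac:(unfold mu in *; lra)) as [f [Hf [H1 _]]].
    exists f. split; auto. unfold PhiD in HPhi. unfold T in HPhi. rewrite <- HPhi. exact H1.
Qed.

Lemma quant_eq : T = Mv -> quantile_value a beta eta nu p = Finite (a + mu).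
Proof.
intros HT. pose proof mu_pos' as Hmu. pose proof Mlt' as HMl.
apply is_lub_Rbar_unique. split.
- intros q [Haq [f [Hf HI]]]. simpl. destruct (Rle_dec q (a + mu)) as [?|Hc]; auto. exfalso.
  pose proof (feas_lb3 a beta eta nu f Hb He Hn Hf q _ ltac:(unfold mu in Hc; lra) HI ltac:(unfold T, Mv in *; lra)).
  unfold T, Mv in *. lra.
- assert (Hin : forall del, 0 < del -> del <= mu / 4 -> del <= 1 -> del <= 2 * (beta - Mv) / (3 * nu) ->
     Qset (a + mu - del)).
  { intros del H1 H2 H3 H4. destruct (C4 a beta eta nu He Hn HM del H1 H2 H3 H4) as [f [Hf HI]].
    split. lra. exists f. split; auto. replace (p - (1 - beta)) with (eta ^ 2 / (2 * nu)). exact HI.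
    }
  assert (Hpos : 0 < 2 * (beta - Mv) / (3 * nu)) by (apply Rdiv_lt_0_compat; lra).
  set (K := 2 * (beta - Mv) / (3 * nu)) in *.
  assert (Hm : forall eps, 0 < eps -> exists m, 0 < m /\ m <= eps /\ Qset (a + mu - m)).
  { intros eps Heps. set (m := Rmin eps (Rmin (mu / 4) (Rmin 1 K))).
    assert (A1 : m <= eps) by apply Rmin_l.
    assert (A2 : m <= Rmin (mu / 4) (Rmin 1 K)) by apply Rmin_r.
    assert (A3 : Rmin (mu / 4) (Rmin 1 K) <= mu / 4) by apply Rmin_l.
    assert (A4 : Rmin (mu / 4) (Rmin 1 K) <= Rmin 1 K) by apply Rmin_r.
    assert (A5 : Rmin 1 K <= 1) by apply Rmin_l.
    assert (A6 : Rmin 1 K <= K) by apply Rmin_r.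
    assert (A0 : 0 < m) by (apply Rmin_glb_lt; [lra| apply Rmin_glb_lt; [lra| apply Rmin_glb_lt; lra]]).
    exists m. split; auto. split; auto. apply Hin; lra. }
  intros u Hu. destruct u as [u| |].
  + simpl. apply Rle_plus_epsilon. intros eps Heps. destruct (Hm eps Heps) as [m [Hm0 [Hme HQ]]].
    specialize (Hu _ HQ). simpl in Hu. lra.
  + simpl; auto.
  + destruct (Hm 1 Rlt_0_1) as [m [_ [_ HQ]]]. specialize (Hu _ HQ). simpl in Hu. contradiction.
Qed.

Lemma quant_gt : Mv < T -> quantile_value a beta eta nu p = p_infty.
Proof.
intros HT. apply is_lub_Rbar_unique. split.
- intros q _. simpl; auto.
- intros u Hu.
  assert (Hin : forall N, exists q, N <= q /\ Qset q).
  { intros N. destruct (C5 a beta eta nu He Hn T N HT ltac:(unfold T; lra)) as [q [H1 [H2 [f [Hf HI]]]]].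
    exists q. split; auto. split; auto. exists f. split; auto. }
  destruct u as [u| |].
  + exfalso. destruct (Hin (u + 1)) as [q [Hq HQ]]. specialize (Hu _ HQ). simpl in Hu. lra.
  + simpl; auto.
  + destruct (Hin 0) as [q [_ HQ]]. specialize (Hu _ HQ). simpl in Hu. contradiction.
Qed.

Lemma final_all : qstar a beta eta nu p = quantile_value a beta eta nu p /\
  qstar a beta eta nu p =
    (if Rle_dec p (1 - beta + eta ^ 2 / (2 * nu))
     then Finite (a + eta / nu - sqrt ((eta / nu) ^ 2 - 2 * beta / nu + 2 * (1 - p) / nu))
     else p_infty).
Proof.
destruct (Rle_dec p (1 - beta + eta ^ 2 / (2 * nu))) as [H|H].
- assert (HT : T <= Mv) by (unfold T, Mv; lra).
  rewrite (qstar_le HT).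
  assert (E : a + ts = a + eta / nu - sqrt ((eta / nu) ^ 2 - 2 * beta / nu + 2 * (1 - p) / nu)) by (unfold ts; ring).
  split; [|rewrite E; reflexivity].
  destruct (Rlt_dec T Mv) as [H'|H'].
  + rewrite (quant_lt H'). reflexivity.
  + assert (HTe : T = Mv) by lra. rewrite (quant_eq HTe).
    destruct (ts_facts HT) as [[Ht0 Htm] [HPhi _]].
    f_equal. f_equal.
    destruct (Rlt_dec ts mu) as [Hl|Hl]; [|lra]. exfalso.
    pose proof (Phi_lt' ts mu Ht0 Hl (Rle_refl _)).
    assert (PhiD eta nu mu = Mv) by (unfold PhiD, Mv, mu; field; lra). lra.
- assert (HT : Mv < T) by (unfold T, Mv; lra).
  rewrite (qstar_gt HT), (quant_gt HT). split; reflexivity.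
Qed.

End Final.

Theorem theorem4 (a beta eta nu p : R) :
  0 < beta -> 0 < eta -> 0 < nu -> eta ^ 2 < 2 * beta * nu ->
  1 - beta <= p <= 1 ->
  let mu := eta / nu in
  let sigma := 2 * beta / nu in
  qstar a beta eta nu p = quantile_value a beta eta nu p /\
  qstar a beta eta nu p =
    (if Rle_dec p (1 - beta + eta ^ 2 / (2 * nu))
     then Finite (a + mu - sqrt (mu ^ 2 - sigma + 2 * (1 - p) / nu))
     else p_infty).
Proof.
intros Hb He Hn HM Hp mu sigma. unfold mu, sigma.
apply final_all; auto.
Qed.
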